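(* In the iAPG setting described in the context, for every $k\ge0$, $$F(x^{(k+1)})-F^*+\frac{\gamma_{k+1}}{2}\|x^*-z^{(k+1)}\|^2\le(1-\alpha_k)\Big[F(x^{(k)})-F^*+\frac{\gamma_k}{2}\|x^*-z^{(k)}\|^2\Big]+\varepsilon_k\alpha_k\|x^*-z^{(k+1)}\|.$$
   Context: iAPG setting. Let $g,h:\mathbb R^n\to\mathbb R$ and $r:\mathbb R^n\to\mathbb R\cup\{+\infty\}$, where $g$ is convex, $\mu$-strongly convex for some $\mu\ge0$, and differentiable with $L_g$-Lipschitz gradient ($L_g>0$); $h$ is convex and differentiable with $L_h$-Lipschitz gradient; $r$ is proper, closed and convex. Put $H=h+r$, $F=g+H$, and assume $F$ attains its minimum value $F^*$ at some point $x^*$. Fix constants $\gamma_{\mathrm{dec}}\in(0,1)$ and $\underline L>0$ with $\mu\le\underline L\le L_g$. We consider points $x^{(k)},z^{(k)},y^{(k)}\in\mathbb R^n$ and scalars $\eta_k>0,\alpha_k>0,\gamma_k>0,\varepsilon_k\ge0$ ($k\ge0$) such that $x^{(0)}=z^{(0)}\in\mathrm{dom}(H)$, $\gamma_0\ge\mu$, and for every $k\ge0$: (i) $\gamma_{\mathrm{dec}}/L_g<\eta_k\le1/\underline L$; (ii) $\gamma_{k+1}=\alpha_k^2/\eta_k=(1-\alpha_k)\gamma_k+\alpha_k\mu$; (iii) $y^{(k)}=\frac{1}{\alpha_k\gamma_k+\gamma_{k+1}}\big(\alpha_k\gamma_k z^{(k)}+\gamma_{k+1}x^{(k)}\big)$;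 (iv) $\mathrm{dist}\big(0,\ \nabla g(y^{(k)})+\tfrac1{\eta_k}(x^{(k+1)}-y^{(k)})+\partial H(x^{(k+1)})\big)\le\varepsilon_k$; (v) $g(x^{(k+1)})\le g(y^{(k)})+\langle\nabla g(y^{(k)}),x^{(k+1)}-y^{(k)}\rangle+\frac1{2\eta_k}\|x^{(k+1)}-y^{(k)}\|^2$; (vi) $z^{(k+1)}=x^{(k)}+\frac1{\alpha_k}(x^{(k+1)}-x^{(k)})$. Here $\partial$ denotes the convex subdifferential and $\mathrm{dist}(0,S)=\inf_{s\in S}\|s\|$. *)

(* Defs.v *)
From mathcomp Require Import all_boot all_order all_algebra all_classical all_reals all_analysis.
Import Order.TTheory GRing.Theory Num.Theory.
Import numFieldNormedType.Exports.
Local Open Scope ring_scope.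
Local Open Scope classical_set_scope.

Set Implicit Arguments. Unset Strict Implicit. Unset Printing Implicit Defensive.

Section Defs.
Variables (R : realType) (n : nat).
Notation vec := 'rV[R]_n.

Definition dotv (u v : vec) : R := \sum_(i < n) u 0 i * v 0 i.
Definition enorm (u : vec) : R := Num.sqrt (dotv u u).

(* df is the gradient of f: f is (Frechet) differentiable at every x with
   derivative v |-> <df x, v>. *)
Definition is_gradient (f : vec -> R) (df : vec -> vec) : Prop :=
  forall x : vec, forall e : R, 0 < e -> exists d : R, 0 < d /\
    forall y : vec, enorm (y - x) < d ->
      `|f y - f x - dotv (df x) (y - x)| <= e * enorm (y - x).

Definition lipschitz_with (L : R) (G : vec -> vec) : Prop :=
  forall x y : vec, enorm (G x - G y) <= L * enorm (x - y).

Definition convex_fun (f : vec -> R) : Prop :=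
  forall (x y : vec) (t : R), 0 <= t <= 1 ->
    f (t *: x + (1 - t) *: y) <= t * f x + (1 - t) * f y.

Definition strongly_convex (mu : R) (f : vec -> R) : Prop :=
  forall (x y : vec) (t : R), 0 <= t <= 1 ->
    f (t *: x + (1 - t) *: y)
      <= t * f x + (1 - t) * f y - mu / 2 * t * (1 - t) * enorm (x - y) ^+ 2.

Definition dom (f : vec -> \bar R) : set vec := [set x | f x < +oo]%E.

Definition proper_fun (f : vec -> \bar R) : Prop :=
  (forall x, f x != -oo)%E /\ exists x, (f x < +oo)%E.

(* closed = closed epigraph (in R^n x R) *)
Definition closed_fun (f : vec -> \bar R) : Prop :=
  closed [set p : (vec * R)%type | (f p.1 <= p.2%:E)%E].

Definition convex_efun (f : vec -> \bar R) : Prop :=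
  forall (x y : vec) (t : R), 0 < t < 1 ->
    (f (t *: x + (1 - t) *: y)%R <= t%:E * f x + (1 - t)%:E * f y)%E.

(* convex subdifferential of an extended-valued function (empty off the domain) *)
Definition subdiff (f : vec -> \bar R) (x : vec) : set vec :=
  [set v | (f x < +oo)%E /\ forall y, (f x + (dotv v (y - x)%R)%:E <= f y)%E].

(* dist(0, S) = inf_{s in S} ||s||  (= +oo if S is empty) *)
Definition dist0 (S : set vec) : \bar R := ereal_inf [set (enorm s)%:E | s in S].

End Defs.

(* Main.v *)
Require Import Defs.
From mathcomp Require Import all_boot all_order all_algebra all_classical all_reals all_analysis.
From mathcomp Require Import ring lra.
Import Order.TTheory GRing.Theory Num.Theory.
Import numFieldNormedType.Exports.
Local Open Scope ring_scope.
Local Open Scope classical_set_scope.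

Set Implicit Arguments. Unset Strict Implicit.
Section Helpers.
Variables (R : realType) (n : nat).
Notation vec := 'rV[R]_n.
Implicit Types u v w a b : vec.

Lemma dotvC u v : dotv u v = dotv v u.
Proof. by rewrite /dotv; apply: eq_bigr => i _; rewrite mulrC. Qed.
Lemma dotvDl u v w : dotv (u + v) w = dotv u w + dotv v w.
Proof. by rewrite /dotv -big_split; apply: eq_bigr => i _; rewrite mxE mulrDl. Qed.
Lemma dotvZl (c : R) u w : dotv (c *: u) w = c * dotv u w.
Proof. by rewrite /dotv mulr_sumr; apply: eq_bigr => i _; rewrite mxE mulrA. Qed.
Lemma dotvNl u w : dotv (- u) w = - dotv u w.
Proof. by rewrite -scaleN1r dotvZl mulN1r. Qed.
Lemma dotvBl u v w : dotv (u - v) w = dotv u w - dotv v w.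
Proof. by rewrite dotvDl dotvNl. Qed.
Lemma dotvDr u v w : dotv w (u + v) = dotv w u + dotv w v.
Proof. by rewrite dotvC dotvDl !(dotvC w). Qed.
Lemma dotvZr (c : R) u w : dotv w (c *: u) = c * dotv w u.
Proof. by rewrite dotvC dotvZl dotvC. Qed.
Lemma dotvBr u v w : dotv w (u - v) = dotv w u - dotv w v.
Proof. by rewrite dotvC dotvBl !(dotvC w). Qed.
Lemma dotv_ge0 u : 0 <= dotv u u.
Proof. by apply: sumr_ge0 => i _; rewrite -expr2 sqr_ge0. Qed.
Lemma enorm_sqr u : enorm u ^+ 2 = dotv u u.
Proof. by rewrite /enorm sqr_sqrtr // dotv_ge0. Qed.
Lemma enorm_ge0 u : 0 <= enorm u.
Proof. exact: sqrtr_ge0. Qed.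
Lemma enormZ (c : R) u : 0 <= c -> enorm (c *: u) = c * enorm u.
Proof.
move=> c0; rewrite /enorm dotvZl dotvZr mulrA -expr2 sqrtrM ?sqr_ge0 //.
by rewrite sqrtr_sqr ger0_norm.
Qed.
Lemma enormN u : enorm (- u) = enorm u.
Proof. by rewrite /enorm dotvNl dotvC dotvNl opprK. Qed.
Lemma dotv_lin2 (c1 c2 : R) a b :
  dotv (c1 *: a + c2 *: b) (c1 *: a + c2 *: b) =
  c1 ^+ 2 * dotv a a + 2 * c1 * c2 * dotv a b + c2 ^+ 2 * dotv b b.
Proof. rewrite !dotvDl !dotvDr !dotvZl !dotvZr (dotvC b a); ring. Qed.
Lemma dotv_polar u v : dotv (u - v) (u - v) = dotv u u - 2 * dotv u v + dotv v v.
Proof. rewrite !dotvBl !dotvBr (dotvC v u); ring. Qed.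

Lemma cs_sq u v : dotv u v ^+ 2 <= dotv u u * dotv v v.
Proof.
have H t : 0 <= dotv u u - 2 * t * dotv u v + t ^+ 2 * dotv v v.
  have -> : dotv u u - 2 * t * dotv u v + t ^+ 2 * dotv v v = dotv (u - t *: v) (u - t *: v).
    by rewrite !dotvBl !dotvBr !dotvZl !dotvZr (dotvC v u); ring.
  exact: dotv_ge0.
have aa := dotv_ge0 u; have bb := dotv_ge0 v.
have [c0|c0] := eqVneq (dotv v v) 0.
  have [b0|b0] := eqVneq (dotv u v) 0.
    by rewrite b0 c0 expr0n /= mulr0.
  have := H ((dotv u u + 1) / (2 * dotv u v)).
  rewrite c0 mulr0 addr0.
  have -> : 2 * ((dotv u u + 1) / (2 * dotv u v)) * dotv u v = dotv u u + 1.
    field. by rewrite b0.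
  lra.
have cp : 0 < dotv v v by rewrite lt_def c0 bb.
have := H (dotv u v / dotv v v).
have -> : dotv u u - 2 * (dotv u v / dotv v v) * dotv u v +
    (dotv u v / dotv v v) ^+ 2 * dotv v v = (dotv u u * dotv v v - dotv u v ^+ 2) / dotv v v.
  by field.
rewrite pmulr_lge0 ?invr_gt0 //; lra.
Qed.

Lemma cs u v : dotv u v <= enorm u * enorm v.
Proof.
have [le0|gt0] := leP (dotv u v) 0.
  by apply: le_trans le0 _; apply: mulr_ge0; apply: enorm_ge0.
rewrite /enorm -sqrtrM ?dotv_ge0 //.
rewrite -(ger0_norm (ltW gt0)) -sqrtr_sqr.
by rewrite ler_sqrt ?cs_sq // mulr_ge0 // dotv_ge0.
Qed.

Lemma quad_bound (c1 c2 : R) a b : 0 <= c1 -> 0 <= c2 ->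
  dotv (c1 *: a + c2 *: b) (c1 *: a + c2 *: b) <=
  (c1 + c2) * (c1 * dotv a a + c2 * dotv b b).
Proof.
move=> h1 h2; rewrite dotv_lin2.
have := dotv_ge0 (a - b); rewrite dotv_polar => hab.
have : 0 <= c1 * c2 * (dotv a a - 2 * dotv a b + dotv b b) by rewrite !mulr_ge0.
move=> H; rewrite -subr_ge0.
have -> : (c1 + c2) * (c1 * dotv a a + c2 * dotv b b) -
  (c1 ^+ 2 * dotv a a + 2 * c1 * c2 * dotv a b + c2 ^+ 2 * dotv b b) =
  c1 * c2 * (dotv a a - 2 * dotv a b + dotv b b) by ring.
exact: H.
Qed.

Lemma lim_le (A B C : R) : 0 <= C -> (forall e, 0 < e -> A <= B + e * C) -> A <= B.
Proof.
move=> C0 H; rewrite leNgt; apply/negP => AB.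
have e0 : 0 < (A - B) / (2 * (C + 1)) by rewrite divr_gt0 // ?subr_gt0 // mulr_gt0 //; lra.
have := H _ e0.
have : (A - B) / (2 * (C + 1)) * C < A - B.
  rewrite mulrAC ltr_pdivrMr; last by rewrite mulr_gt0 //; lra.
  have : 0 < A - B by lra. nra.
lra.
Qed.


Lemma sc_first (mu : R) (g : vec -> R) G : 0 <= mu -> strongly_convex mu g ->
  is_gradient g G -> forall u y,
  g y + dotv (G y) (u - y) + mu / 2 * enorm (u - y) ^+ 2 <= g u.
Proof.
move=> mu0 gsc gG u y.
set d0 := enorm (u - y); set D := dotv (G y) (u - y).
have d00 : 0 <= d0 by apply: enorm_ge0.
apply: (@lim_le _ _ (d0 + mu / 2 * d0 ^+ 2)); first by rewrite addr_ge0 // mulr_ge0 // ?divr_ge0 // exprn_ge0.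
move=> e e0.
have [d [d0p Hd]] := gG y e e0.
pose t := Num.min (Num.min (1/2) e) (d / (d0 + 1)).
have dd0 : 0 < d / (d0 + 1) by rewrite divr_gt0 //; lra.
have tpos : 0 < t by rewrite /t !lt_min; apply/andP; split => //; apply/andP; split => //; lra.
have tle1 : t <= 1/2 by rewrite /t !ge_min lexx.
have tlee : t <= e by rewrite /t !ge_min lexx orbT.
have tled : t <= d / (d0 + 1) by rewrite /t !ge_min lexx orbT.
pose P := t *: u + (1 - t) *: y.
have PY : P - y = t *: (u - y) by apply/rowP => i; rewrite !mxE; ring.
have nPY : enorm (P - y) = t * d0 by rewrite PY enormZ // ltW.
have : enorm (P - y) < d.
  rewrite nPY; have : t * d0 <= d / (d0 + 1) * d0 by rewrite ler_wpM2r.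
  have : d / (d0 + 1) * d0 < d.
    rewrite mulrAC ltr_pdivrMr; last by lra.
    nra.
  lra.
move=> /Hd; rewrite nPY PY dotvZr -/D ler_norml => /andP [H1 _].
have := gsc u y t; rewrite -/P -/d0 => /(_ _) H2.
have {H2} H2 : g P <= t * g u + (1 - t) * g y - mu / 2 * t * (1 - t) * d0 ^+ 2.
  by apply: H2; apply/andP; split; lra.
have H3 : t * (D - e * d0) <= t * (g u - g y - mu / 2 * (1 - t) * d0 ^+ 2).
  have -> : t * (D - e * d0) = - (e * (t * d0)) + t * D by ring.
  have -> : t * (g u - g y - mu / 2 * (1 - t) * d0 ^+ 2) =
     t * g u + (1 - t) * g y - mu / 2 * t * (1 - t) * d0 ^+ 2 - g y by ring.
  lra.
rewrite ler_pM2l // in H3.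
have H4 : mu / 2 * t * d0 ^+ 2 <= mu / 2 * e * d0 ^+ 2.
  rewrite ler_wpM2r ?exprn_ge0 // ler_wpM2l // divr_ge0 //.
have -> : e * (d0 + mu / 2 * d0 ^+ 2) = e * d0 + mu / 2 * e * d0 ^+ 2 by ring.
have E5 : mu / 2 * (1 - t) * d0 ^+ 2 = mu / 2 * d0 ^+ 2 - mu / 2 * t * d0 ^+ 2 by ring.
rewrite E5 in H3.
lra.
Qed.

End Helpers.

Theorem proposition3p4 (R : realType) (n : nat)
  (g h : 'rV[R]_n -> R) (r : 'rV[R]_n -> \bar R)
  (gradg gradh : 'rV[R]_n -> 'rV[R]_n) (mu Lg Lh : R)
  (xstar : 'rV[R]_n) (Fstar : R)
  (gamma_dec Lunder : R)
  (x z y : nat -> 'rV[R]_n) (eta alpha gamma eps : nat -> R) :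
  (* g: convex, mu-strongly convex (mu >= 0), differentiable, Lg-Lipschitz gradient *)
  convex_fun g -> 0 <= mu -> strongly_convex mu g ->
  is_gradient g gradg -> 0 < Lg -> lipschitz_with Lg gradg ->
  (* h: convex, differentiable, Lh-Lipschitz gradient *)
  convex_fun h -> is_gradient h gradh -> lipschitz_with Lh gradh ->
  (* r: proper, closed, convex *)
  proper_fun r -> closed_fun r -> convex_efun r ->
  (* F = g + h + r attains its minimum value Fstar at xstar *)
  ((g xstar)%:E + ((h xstar)%:E + r xstar) = Fstar%:E)%E ->
  (forall u, (Fstar%:E <= (g u)%:E + ((h u)%:E + r u))%E) ->
  (* constants *)
  0 < gamma_dec < 1 -> 0 < Lunder -> mu <= Lunder -> Lunder <= Lg ->
  (* initialisation *)
  x 0%N = z 0%N -> (x 0%N) \in dom (fun u => (h u)%:E + r u)%E ->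
  mu <= gamma 0%N ->
  (forall k, 0 < eta k /\ 0 < alpha k /\ 0 < gamma k /\ 0 <= eps k) ->
  (* (i) *)
  (forall k, gamma_dec / Lg < eta k /\ eta k <= 1 / Lunder) ->
  (* (ii) *)
  (forall k, gamma k.+1 = alpha k ^+ 2 / eta k /\
             alpha k ^+ 2 / eta k = (1 - alpha k) * gamma k + alpha k * mu) ->
  (* (iii) *)
  (forall k, y k = (alpha k * gamma k + gamma k.+1)^-1 *:
                   (alpha k * gamma k *: z k + gamma k.+1 *: x k)) ->
  (* (iv) *)
  (forall k, (dist0 [set (gradg (y k) + (eta k)^-1 *: (x k.+1 - y k) + v)%R
                    | v in subdiff (fun u => (h u)%:E + r u)%E (x k.+1)]
              <= (eps k)%:E)%E) ->
  (* (v) *)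
  (forall k, g (x k.+1) <= g (y k) + dotv (gradg (y k)) (x k.+1 - y k)
                           + 1 / (2 * eta k) * enorm (x k.+1 - y k) ^+ 2) ->
  (* (vi) *)
  (forall k, z k.+1 = x k + (alpha k)^-1 *: (x k.+1 - x k)) ->
  forall k,
    ((g (x k.+1))%:E + ((h (x k.+1))%:E + r (x k.+1)) - Fstar%:E
       + (gamma k.+1 / 2 * enorm (xstar - z k.+1) ^+ 2)%:E
     <= (1 - alpha k)%:E *
          ((g (x k))%:E + ((h (x k))%:E + r (x k)) - Fstar%:E
             + (gamma k / 2 * enorm (xstar - z k) ^+ 2)%:E)
        + (eps k * alpha k * enorm (xstar - z k.+1))%:E)%E.
Proof.
Proof.
move=> gcvx mu0 gsc ggrad Lg0 gLip hcvx hgrad hLip [rnm _] rclosed rcvx Fxs Fmin gd Lu0 muLu LuLg x0z0 x0dom mug0 pos etab recur ydef iv vdes zdef k.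
have [et0 [al0 [ga0 ep0]]] := pos k.
have [_ [_ [ga10 _]]] := pos k.+1.
have [gk1 rec] := recur k.
have [_ etaLu] := etab k.
have ieta : mu <= (eta k)^-1.
  have H : Lunder * eta k <= 1.
    by have := ler_wpM2l (ltW Lu0) etaLu; rewrite mul1r divff ?gt_eqF.
  apply: le_trans muLu _; rewrite -(ler_pM2r et0) mulVf ?gt_eqF //.
have al1 : alpha k <= 1.
  rewrite leNgt; apply/negP => a1.
  have h1 : mu * alpha k ^+ 2 <= alpha k ^+ 2 / eta k.
    by rewrite mulrC ler_wpM2l ?exprn_ge0 // ltW.
  have h2 : 0 <= mu * alpha k * (alpha k - 1) by rewrite !mulr_ge0 // ?ltW //; lra.
  have h3 : 0 < gamma k * (alpha k - 1) by rewrite mulr_gt0 //; lra.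
  rewrite rec in h1. 
  have e2 : mu * alpha k * (alpha k - 1) = mu * alpha k ^+ 2 - mu * alpha k by ring.
  rewrite e2 in h2. lra.
have ga1E : gamma k.+1 = (1 - alpha k) * gamma k + alpha k * mu by rewrite gk1 rec.
have gpos : 0 < gamma k + alpha k * mu by rewrite ltr_wpDr // mulr_ge0 // ltW.
have [rs rsE] : exists rs, r xstar = rs%:E.
  move: Fxs (rnm xstar); case: (r xstar) => [rs| |] //=; first by move=> *; exists rs.
have FsE : Fstar = g xstar + (h xstar + rs).
  by move: Fxs; rewrite rsE -!EFinD => -[].
set a := alpha k. set et := eta k. set ga := gamma k. set ga1 := gamma k.+1.
set xk := x k. set xk1 := x k.+1. set zk := z k. set zk1 := z k.+1. set yk := y k.
set ep := eps k. set G := gradg yk.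
have getS : forall dl, 0 < dl -> exists v,
    subdiff (fun u => (h u)%:E + r u)%E xk1 v /\ enorm (G + et^-1 *: (xk1 - yk) + v) < ep + dl.
  move=> dl dl0; have := iv k; rewrite /dist0 => H.
  have : (ereal_inf [set (enorm s)%:E | s in [set (gradg (y k) + (eta k)^-1 *: (x k.+1 - y k) + v)%R
                    | v in subdiff (fun u => (h u)%:E + r u)%E (x k.+1)]] < (ep + dl)%:E)%E.
    by apply: le_lt_trans H _; rewrite lte_fin /ep ltrDl.
  move=> /ereal_inf_lt [_ [s [v vS <-] <-]]; rewrite lte_fin => hs.
  by exists v; split.
have [rp rpE] : exists rp, r xk1 = rp%:E.
  have [v1 [[Hfin _] _]] := getS 1 ltr01.
  move: Hfin (rnm xk1); case: (r xk1) => [rp| |] //=; first by move=> *; exists rp.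
set u := a *: xstar + (1 - a) *: xk.
set va := xstar - zk. set vb := xstar - xk. set w := xstar - zk1.
set Q := u - yk. set P := xk1 - yk.
have QP : u - xk1 = Q - P by apply/rowP => ?; rewrite !mxE; ring.
have uxw : u - xk1 = a *: w.
  apply/rowP => ?; rewrite /u /w /zk1 zdef -/a -/xk -/xk1 !mxE; by field; rewrite !gt_eqF.
have Qeq : Q = (a / (ga + a * mu)) *: (ga *: va + (a * mu) *: vb).
  apply/rowP => ?; rewrite /Q /yk ydef -/a -/ga -/xk -/zk /ga1 ga1E /va /vb !mxE.
  have -> : a * ga + ((1 - a) * ga + a * mu) = ga + a * mu by ring.
  rewrite -/a -/ga; by field; rewrite !gt_eqF.
have key : forall Fk ru, r u = ru%:E ->
    g u + (h u + ru) <= a * Fstar + (1 - a) * Fk - mu / 2 * a * (1 - a) * dotv vb vb ->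
    g xk1 + (h xk1 + rp) - Fstar + ga1 / 2 * enorm w ^+ 2 <=
    (1 - a) * (Fk - Fstar + ga / 2 * enorm va ^+ 2) + ep * a * enorm w.
  move=> Fk ru ruE HE.
  apply: (@lim_le _ _ _ (a * enorm w)); first by rewrite mulr_ge0 ?enorm_ge0 // ltW.
  move=> dl dl0.
  have [v [[_ vsub] hs]] := getS dl dl0.
  set s := G + et^-1 *: (xk1 - yk) + v in hs.
  have HC := vsub u; rewrite ruE rpE -!EFinD lee_fin in HC.
  have vE : v = s - G - et^-1 *: P by apply/rowP => ?; rewrite !mxE; ring.
  have eC : dotv v (u - xk1) = dotv s (Q - P) - (dotv G Q - dotv G P) - et^-1 * (dotv P Q - dotv P P).
    rewrite vE QP (dotvBl (s - G) (et^-1 *: P) (Q - P)) (dotvBl s G (Q - P)) dotvZl.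
    by rewrite (dotvBr Q P G) (dotvBr Q P P).
  rewrite eC in HC.
  have sw : - dotv s (Q - P) <= a * ((ep + dl) * enorm w).
    rewrite -QP uxw dotvZr -mulrN; apply: ler_wpM2l; first exact: ltW.
    rewrite -dotvNl; apply: le_trans (cs (- s) w) _; rewrite enormN; apply: ler_wpM2r; [exact: enorm_ge0 | exact: ltW].
  have HA := sc_first mu0 gsc ggrad u yk; rewrite -/G -/Q enorm_sqr in HA.
  have HB := vdes k; rewrite -/xk1 -/yk -/G -/P -/et enorm_sqr in HB.
  have eB : 1 / (2 * et) = et^-1 / 2 by field; rewrite !gt_eqF.
  rewrite eB in HB.
  have pol : et^-1 * (a ^+ 2 * dotv w w) = et^-1 * (dotv Q Q - 2 * dotv P Q + dotv P P).
    have := dotv_polar Q P; rewrite -QP uxw dotvZl dotvZr (dotvC Q P) => <-; ring.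
  have HH : (et^-1 - mu) * dotv Q Q <= (1 - a) * (ga * dotv va va + a * mu * dotv vb vb).
    have eeta : et^-1 - mu = (1 - a) * (ga + a * mu) / a ^+ 2.
      have := rec; rewrite -/a -/et -/ga => rc.
      have -> : et^-1 = a ^+ 2 / et / a ^+ 2 by field; rewrite !gt_eqF.
      by rewrite rc; field; rewrite !gt_eqF.
    have -> : (et^-1 - mu) * dotv Q Q =
       (1 - a) / (ga + a * mu) * dotv (ga *: va + (a * mu) *: vb) (ga *: va + (a * mu) *: vb).
      rewrite eeta {1 2}Qeq dotvZl dotvZr; by field; rewrite !gt_eqF.
    have := quad_bound va vb (ltW ga0) (mulr_ge0 (ltW al0) mu0).
    have c0 : 0 <= (1 - a) / (ga + a * mu) by rewrite divr_ge0 ?subr_ge0 // ltW.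
    move=> /(ler_wpM2l c0) H.
    apply: le_trans H _.
    rewrite le_eqVlt; apply/orP; left; apply/eqP; rewrite -/a -/ga; by field; rewrite !gt_eqF.
  unfold Q, P, u, va, vb, w, G, a, et, ga, ga1, xk, xk1, zk, zk1, yk, ep in *.
  rewrite gk1 !enorm_sqr.
  lra.
have [alt1|age1] := ltP a 1.
  move: (rnm xk); case rkE: (r xk) => [rk| |] // _.
    have a01s : 0 < a < 1 by rewrite al0 alt1.
have hr := rcvx xstar xk a a01s.
    have {hr} hr : (r u <= (a * rs + (1 - a) * rk)%:E)%E.
      by rewrite EFinD !EFinM -rsE -rkE.
    move: (rnm u) hr; case ruE: (r u) => [ru| |] // _; rewrite ?lee_fin // => hr.
    have a01 : 0 <= a <= 1 by rewrite ltW // ltW.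
    have gu := gsc xstar xk a a01; rewrite -/u -/vb enorm_sqr in gu.
    have hu := hcvx xstar xk a a01; rewrite -/u in hu.
    have := key (g xk + (h xk + rk)) ru ruE _.
    move=> /(_ _) H.
    have {}H : g xk1 + (h xk1 + rp) - Fstar + ga1 / 2 * enorm w ^+ 2 <=
       (1 - a) * (g xk + (h xk + rk) - Fstar + ga / 2 * enorm va ^+ 2) + ep * a * enorm w.
      by apply: H; rewrite FsE; lra.
    rewrite rpE -?EFinN -?EFinD -?EFinM -?EFinD lee_fin.
    exact: H.
  have a1p : (0 < (1 - a)%:E)%E by rewrite lte_fin subr_gt0.
  rewrite (addey (x := (h xk)%:E)) // (addey (x := (g xk)%:E)) // addye //.
  by rewrite muleC gt0_mulye // addye // leey.
have a1 : a = 1 by apply/le_anti/andP; split.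
have uE : u = xstar by rewrite /u a1 scale1r subrr scale0r addr0.
have ruE : r u = rs%:E by rewrite uE rsE.
have := key 0 rs ruE _.
move=> /(_ _) H.
have {}H : g xk1 + (h xk1 + rp) - Fstar + ga1 / 2 * enorm w ^+ 2 <=
    (1 - a) * (0 - Fstar + ga / 2 * enorm va ^+ 2) + ep * a * enorm w.
  by apply: H; rewrite uE a1 FsE; lra.
rewrite a1 subrr mul0r add0r in H.
rewrite a1 subrr mul0e add0e rpE -?EFinN -?EFinD -?EFinM -?EFinD lee_fin.
exact: H.
Qed.
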